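(* Let $T_b, T_r, S, T_u : \mathbb{N}_{\geq 1} \to \mathbb{R}_{>0}$ satisfy $T_r(n) = T_b(n) + T_r(n-1)$ and $T_u(n) = S(n) + T_u(\lfloor n/2 \rfloor)$ for $n \geq 2$, where $T_b$ and $S$ are each $\Theta(n^{a}(\log n)^{b})$ for some non-negative integers $a,b$. Then $T_u(n)/T_r(n) \to 0$ (super-linear speedup, i.e. $\Theta(T_u) \subsetneq \Theta(T_r)$) if and only if $S(n)/(n\, T_b(n)) \to 0$ (i.e. $\Theta(S) \subsetneq \Theta(n \, T_b)$).
   Context: $T_b(n)$ models the time of the $n$-th recursive step of an original linear recursion, $T_r(n)$ the time of the original recursion with recursion depth $n$, $S(n)=T_c(n)+T_d(n)$ the time of a combined recursive step of the unfolder and meta-interpreter in runtime repeated recursion unfolding, and $T_u(n)$ the total time of runtime repeated recursion unfolding for recursion depth $n$. Asymptotic notation is as $n\to\infty$. *)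

(* Defs.v *)
From Stdlib Require Import Reals Lra Lia.
From Coquelicot Require Import Coquelicot.
Open Scope R_scope.

Definition bigTheta (f g : nat -> R) : Prop :=
  exists (c1 c2 : R) (N : nat), 0 < c1 /\ 0 < c2 /\
    forall n : nat, (N <= n)%nat -> c1 * g n <= f n /\ f n <= c2 * g n.

Definition polylog (a b : nat) (n : nat) : R := INR n ^ a * ln (INR n) ^ b.

(* Main.v *)
Require Import Defs.
From Stdlib Require Import Reals.
From Coquelicot Require Import Coquelicot.
Open Scope R_scope.
From Stdlib Require Import Lra Lia Psatz Arith.

Lemma half_facts (n : nat) : (2 * (n/2) <= n /\ n <= 2 * (n/2) + 1)%nat.
Proof.
  pose proof (Nat.div_mod_eq n 2). pose proof (Nat.mod_upper_bound n 2). lia.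
Qed.

Lemma INR_ge1 (n : nat) : (1 <= n)%nat -> 1 <= INR n.
Proof. intro H. apply (le_INR 1) in H. simpl in H. exact H. Qed.

Lemma ln_nonneg (n : nat) : (1 <= n)%nat -> 0 <= ln (INR n).
Proof. intro H. rewrite <- ln_1. apply ln_le; [lra| apply INR_ge1; auto]. Qed.

Lemma p_nonneg a b n : (1 <= n)%nat -> 0 <= polylog a b n.
Proof.
  intro H. unfold polylog. apply Rmult_le_pos; apply pow_le.
  - pose proof (INR_ge1 n H); lra.
  - apply ln_nonneg; auto.
Qed.

Lemma p_mono a b m n : (1 <= m)%nat -> (m <= n)%nat -> polylog a b m <= polylog a b n.
Proof.
  intros Hm Hmn. unfold polylog. pose proof (INR_ge1 m Hm).
  assert (INR m <= INR n) by (apply le_INR; auto).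
  apply Rmult_le_compat.
  - apply pow_le; lra.
  - apply pow_le, ln_nonneg; auto.
  - apply pow_incr; lra.
  - apply pow_incr; split; [apply ln_nonneg; auto| apply ln_le; lra].
Qed.

Lemma p_ge1 a b n : (3 <= n)%nat -> 1 <= polylog a b n.
Proof.
  intro H. unfold polylog.
  assert (H3 : 3 <= INR n) by (apply (le_INR 3) in H; simpl in H; lra).
  rewrite <- (Rmult_1_l 1). apply Rmult_le_compat; try lra.
  - apply pow_R1_Rle; lra.
  - apply pow_R1_Rle. rewrite <- (ln_exp 1). apply ln_le.
    + apply exp_pos.
    + pose proof exp_le_3; lra.
Qed.

Lemma p_half a b n : (1 <= n)%nat ->
  polylog a b n <= 2 ^ a * 2 ^ b * polylog a b (n / 2 + 1).
Proof.
  intro H. destruct (half_facts n) as [H1 H2].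
  set (h := (n / 2)%nat) in *.
  assert (Hx1 : 1 <= INR (h + 1)) by (apply INR_ge1; lia).
  assert (Hn1 : 1 <= INR n) by (apply INR_ge1; lia).
  assert (Hh : INR n <= 2 * INR (h + 1)).
  { replace 2 with (INR 2) by (simpl; lra). rewrite <- mult_INR. apply le_INR. lia. }
  assert (Hsq : INR n <= INR (h + 1) ^ 2).
  { rewrite <- pow_INR. apply le_INR. simpl. nia. }
  assert (Hln : ln (INR n) <= 2 * ln (INR (h+1))).
  { replace (2 * ln (INR (h+1))) with (ln (INR (h+1) ^ 2)).
    - apply ln_le; lra.
    - rewrite ln_pow by lra. simpl. lra. }
  unfold polylog.
  replace (2 ^ a * 2 ^ b * (INR (h + 1) ^ a * ln (INR (h + 1)) ^ b))
    with ((2 * INR (h+1)) ^ a * (2 * ln (INR (h+1))) ^ b)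
    by (rewrite !Rpow_mult_distr; ring).
  apply Rmult_le_compat.
  - apply pow_le; lra.
  - apply pow_le, ln_nonneg; lia.
  - apply pow_incr; lra.
  - apply pow_incr; split; [apply ln_nonneg; lia| lra].
Qed.

Lemma Tr_up (Tb Tr : nat -> R) a b c2 N m
  (hTr_rec : forall n : nat, (2 <= n)%nat -> Tr n = Tb n + Tr (n - 1)%nat)
  (hb : forall n, (N <= n)%nat -> Tb n <= c2 * polylog a b n) (hc2 : 0 < c2)
  (hm : (N <= m)%nat) (hm1 : (1 <= m)%nat) :
  forall j, Tr (m + j)%nat <= Tr m + INR j * c2 * polylog a b (m + j).
Proof.
  induction j.
  - rewrite Nat.add_0_r; simpl; lra.
  - rewrite (hTr_rec (m + S j)%nat) by lia. replace (m + S j - 1)%nat with (m + j)%nat by lia.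
    rewrite S_INR. pose proof (hb (m + S j)%nat ltac:(lia)).
    pose proof (p_mono a b (m+j) (m + S j) ltac:(lia) ltac:(lia)).
    pose proof (pos_INR j).
    assert (INR j * c2 * polylog a b (m + j) <= INR j * c2 * polylog a b (m + S j))
      by (apply Rmult_le_compat_l; nra).
    lra.
Qed.

Lemma Tr_low (Tb Tr : nat -> R) a b c1 N m
  (hTr_rec : forall n : nat, (2 <= n)%nat -> Tr n = Tb n + Tr (n - 1)%nat)
  (hb : forall n, (N <= n)%nat -> c1 * polylog a b n <= Tb n) (hc1 : 0 < c1)
  (hm : (N <= m)%nat) (hm1 : (1 <= m)%nat) :
  forall j, Tr m + INR j * c1 * polylog a b (m + 1) <= Tr (m + j)%nat.
Proof.
  induction j.
  - rewrite Nat.add_0_r; simpl; lra.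
  - rewrite (hTr_rec (m + S j)%nat) by lia. replace (m + S j - 1)%nat with (m + j)%nat by lia.
    rewrite S_INR. pose proof (hb (m + S j)%nat ltac:(lia)).
    pose proof (p_mono a b (m+1) (m + S j) ltac:(lia) ltac:(lia)).
    assert (c1 * polylog a b (m + 1) <= c1 * polylog a b (m + S j))
      by (apply Rmult_le_compat_l; lra).
    lra.
Qed.

Lemma Tr_upper (Tb Tr : nat -> R) a b
  (hTr_pos : forall n : nat, (1 <= n)%nat -> 0 < Tr n)
  (hTr_rec : forall n : nat, (2 <= n)%nat -> Tr n = Tb n + Tr (n - 1)%nat)
  (hTb : bigTheta Tb (polylog a b)) :
  exists K1 N1, 0 < K1 /\ forall n, (N1 <= n)%nat -> Tr n <= K1 * (INR n * polylog a b n).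
Proof.
  destruct hTb as (c1 & c2 & N & hc1 & hc2 & hb).
  set (m0 := Nat.max N 1).
  exists (Tr m0 + c2), (Nat.max m0 3). split.
  { pose proof (hTr_pos m0 ltac:(lia)); lra. }
  intros n Hn.
  pose proof (Tr_up Tb Tr a b c2 N m0 hTr_rec (fun n h => proj2 (hb n h)) hc2 ltac:(lia) ltac:(lia) (n - m0)).
  replace (m0 + (n - m0))%nat with n in H by lia.
  pose proof (p_ge1 a b n ltac:(lia)).
  assert (H3 : 3 <= INR n) by (replace 3 with (INR 3) by (simpl; lra); apply le_INR; lia).
  assert (INR (n - m0) <= INR n) by (apply le_INR; lia).
  pose proof (pos_INR (n - m0)). pose proof (hTr_pos m0 ltac:(lia)).
  set (P := polylog a b n) in *.
  assert (1 <= INR n * P) by nra.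
  assert (Tr m0 * 1 <= Tr m0 * (INR n * P)) by (apply Rmult_le_compat_l; lra).
  assert (INR (n - m0) * c2 * P <= INR n * c2 * P)
    by (apply Rmult_le_compat_r; [lra| apply Rmult_le_compat_r; lra]).
  nra.
Qed.

Lemma Tr_lower (Tb Tr : nat -> R) a b
  (hTr_pos : forall n : nat, (1 <= n)%nat -> 0 < Tr n)
  (hTr_rec : forall n : nat, (2 <= n)%nat -> Tr n = Tb n + Tr (n - 1)%nat)
  (hTb : bigTheta Tb (polylog a b)) :
  exists K2 N2, 0 < K2 /\ forall n, (N2 <= n)%nat -> K2 * (INR n * polylog a b n) <= Tr n.
Proof.
  destruct hTb as (c1 & c2 & N & hc1 & hc2 & hb).
  set (m0 := Nat.max N 1).
  assert (hq : 0 < 2 ^ a * 2 ^ b) by (apply Rmult_lt_0_compat; apply pow_lt; lra).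
  exists (c1 / (2 * (2 ^ a * 2 ^ b))), (2 * m0 + 2)%nat. split.
  { apply Rdiv_lt_0_compat; lra. }
  intros n Hn. destruct (half_facts n) as [H1 H2].
  set (h := (n / 2)%nat) in *.
  pose proof (Tr_low Tb Tr a b c1 N h hTr_rec (fun n h => proj1 (hb n h)) hc1 ltac:(lia) ltac:(lia) (n - h)).
  replace (h + (n - h))%nat with n in H by lia.
  pose proof (p_half a b n ltac:(lia)). fold h in H0.
  assert (Hh : INR n <= 2 * INR (n - h)).
  { replace 2 with (INR 2) by (simpl; lra). rewrite <- mult_INR. apply le_INR. lia. }
  pose proof (hTr_pos h ltac:(lia)).
  pose proof (p_nonneg a b n ltac:(lia)). pose proof (p_nonneg a b (h+1) ltac:(lia)).
  pose proof (pos_INR n).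
  set (q := 2 ^ a * 2 ^ b) in *.
  set (P := polylog a b n) in *. set (Q := polylog a b (h+1)) in *.
  assert (c1 / (2 * q) * (INR n * P) <= c1 / 2 * INR n * Q).
  { unfold Rdiv. rewrite Rinv_mult.
    assert (P * / q <= Q).
    { apply (Rmult_le_reg_r q); [lra|]. rewrite Rmult_assoc, Rinv_l by lra. lra. }
    replace (c1 * (/ 2 * / q) * (INR n * P)) with ((c1 * /2 * INR n) * (P * / q)) by ring.
    replace (c1 * / 2 * INR n * Q) with ((c1 * /2 * INR n) * Q) by ring.
    apply Rmult_le_compat_l; [|lra]. nra. }
  assert (c1 / 2 * INR n * Q <= INR (n - h) * c1 * Q).
  { replace (c1 / 2 * INR n * Q) with ((INR n / 2) * (c1 * Q)) by (field).
    replace (INR (n - h) * c1 * Q) with (INR (n - h) * (c1 * Q)) by ring.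
    apply Rmult_le_compat_r; [nra|lra]. }
  lra.
Qed.

Lemma bounded_init (f : nat -> R) (L : nat) : exists A, 0 <= A /\ forall m, (m < L)%nat -> f m <= A.
Proof.
  induction L.
  - exists 0. split; [lra| intros; lia].
  - destruct IHL as [A [HA0 HA]]. exists (Rmax A (f L)). split.
    + apply Rle_trans with A; [lra| apply Rmax_l].
    + intros m Hm. destruct (Nat.eq_dec m L).
      * subst; apply Rmax_r.
      * apply Rle_trans with A; [apply HA; lia| apply Rmax_l].
Qed.

Lemma Tu_bound (Tu S Tr : nat -> R) eps M A T
  (hTu_rec : forall n : nat, (2 <= n)%nat -> Tu n = S n + Tu (n / 2)%nat)
  (heps : 0 < eps) (hM : (1 <= M)%nat)
  (hA : forall m, (m < 2 * M)%nat -> Tu m <= A)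
  (hS : forall m, (M <= m)%nat -> S m <= eps * Tr m) (hT : 0 <= T) :
  forall n, (forall m, (M <= m <= n)%nat -> Tr m <= INR m * T) ->
    Tu n <= A + 2 * eps * INR n * T.
Proof.
  intro n. induction n as [n IH] using lt_wf_ind. intros HTr.
  pose proof (pos_INR n).
  destruct (Nat.lt_ge_cases n (2 * M)) as [Hl | Hg].
  - pose proof (hA n Hl).
    assert (0 <= 2 * eps * INR n * T) by (apply Rmult_le_pos; [nra| lra]).
    lra.
  - destruct (half_facts n) as [H1 H2].
    rewrite hTu_rec by lia.
    assert (IHh := IH (n / 2)%nat ltac:(lia) (fun m hm => HTr m ltac:(lia))).
    pose proof (hS n ltac:(lia)). pose proof (HTr n ltac:(lia)).
    assert (Hh : 2 * INR (n / 2) <= INR n).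
    { replace 2 with (INR 2) by (simpl; lra). rewrite <- mult_INR. apply le_INR. lia. }
    assert (eps * Tr n <= eps * (INR n * T)) by (apply Rmult_le_compat_l; lra).
    assert (2 * eps * INR (n / 2) * T <= eps * INR n * T).
    { replace (2 * eps * INR (n / 2) * T) with ((2 * INR (n / 2)) * (eps * T)) by ring.
      replace (eps * INR n * T) with (INR n * (eps * T)) by ring.
      apply Rmult_le_compat_r; [nra| lra]. }
    lra.
Qed.

Theorem mainTheorem10 (Tb Tr S Tu : nat -> R)
  (hTb_pos : forall n : nat, (1 <= n)%nat -> 0 < Tb n)
  (hTr_pos : forall n : nat, (1 <= n)%nat -> 0 < Tr n)
  (hS_pos : forall n : nat, (1 <= n)%nat -> 0 < S n)
  (hTu_pos : forall n : nat, (1 <= n)%nat -> 0 < Tu n)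
  (hTr_rec : forall n : nat, (2 <= n)%nat -> Tr n = Tb n + Tr (n - 1)%nat)
  (hTu_rec : forall n : nat, (2 <= n)%nat -> Tu n = S n + Tu (n / 2)%nat)
  (a b : nat) (hTb_theta : bigTheta Tb (polylog a b))
  (c d : nat) (hS_theta : bigTheta S (polylog c d)) :
  is_lim_seq (fun n => Tu n / Tr n) 0 <->
  is_lim_seq (fun n => S n / (INR n * Tb n)) 0.
Proof.
  destruct (Tr_upper Tb Tr a b hTr_pos hTr_rec hTb_theta) as (K1 & N1 & hK1 & hup).
  destruct (Tr_lower Tb Tr a b hTr_pos hTr_rec hTb_theta) as (K2 & N2 & hK2 & hlow).
  destruct hTb_theta as (c1 & c2 & N & hc1 & hc2 & hb).
  split.
  - intro Hlim.
    assert (Hw := is_lim_seq_scal_l _ (K1 / c1) 0 Hlim). simpl in Hw. rewrite Rmult_0_r in Hw.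
    apply (is_lim_seq_le_le_loc (fun _ => 0) _ (fun n => K1 / c1 * (Tu n / Tr n)) 0); [| apply is_lim_seq_const | exact Hw].
    exists (Nat.max N1 (Nat.max N 3)). intros n Hn.
    destruct (half_facts n) as [H1 H2].
    assert (Hn3 : 3 <= INR n) by (replace 3 with (INR 3) by (simpl; lra); apply le_INR; lia).
    pose proof (hTb_pos n ltac:(lia)). pose proof (hTr_pos n ltac:(lia)).
    pose proof (hS_pos n ltac:(lia)). pose proof (hTu_pos (n/2)%nat ltac:(lia)).
    pose proof (hTu_rec n ltac:(lia)).
    pose proof (hup n ltac:(lia)) as Hupn. destruct (hb n ltac:(lia)) as [Hb1 Hb2].
    set (P := polylog a b n) in *.
    assert (Hx : 0 < INR n * Tb n) by nra.
    split.
    + apply Rlt_le, Rdiv_lt_0_compat; lra.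
    + set (k := K1 / c1). assert (Hk : K1 = k * c1) by (unfold k; field; lra).
      assert (Hk0 : 0 < k) by (unfold k; apply Rdiv_lt_0_compat; lra).
      set (z := Tu n / Tr n). assert (Hz : Tu n = z * Tr n) by (unfold z; field; lra).
      assert (Hz0 : 0 <= z) by (unfold z; apply Rlt_le, Rdiv_lt_0_compat; lra).
      apply Rle_div_l; [lra|].
      assert (Tr n <= k * (INR n * Tb n)).
      { rewrite Hk in Hupn. assert (INR n * P * c1 <= INR n * Tb n).
        { replace (INR n * P * c1) with (INR n * (c1 * P)) by ring.
          apply Rmult_le_compat_l; lra. }
        assert (k * (INR n * P * c1) <= k * (INR n * Tb n)) by (apply Rmult_le_compat_l; lra).
        lra. }
      assert (z * Tr n <= z * (k * (INR n * Tb n))) by (apply Rmult_le_compat_l; lra).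
      lra.
  - intro Hlim.
    assert (Hr : is_lim_seq (fun n => S n / Tr n) 0).
    { assert (Hw := is_lim_seq_scal_l _ (c2 / K2) 0 Hlim). simpl in Hw. rewrite Rmult_0_r in Hw.
      apply (is_lim_seq_le_le_loc (fun _ => 0) _ (fun n => c2 / K2 * (S n / (INR n * Tb n))) 0); [| apply is_lim_seq_const | exact Hw].
      exists (Nat.max N2 (Nat.max N 1)). intros n Hn.
      assert (Hn1 : 1 <= INR n) by (apply INR_ge1; lia).
      pose proof (hTb_pos n ltac:(lia)). pose proof (hTr_pos n ltac:(lia)).
      pose proof (hS_pos n ltac:(lia)).
      pose proof (hlow n ltac:(lia)). destruct (hb n ltac:(lia)) as [Hb1 Hb2].
      set (P := polylog a b n) in *.
      assert (Hx : 0 < INR n * Tb n) by nra.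
      split.
      + apply Rlt_le, Rdiv_lt_0_compat; lra.
      + set (k := c2 / K2). assert (Hk : c2 = k * K2) by (unfold k; field; lra).
        assert (Hk0 : 0 < k) by (unfold k; apply Rdiv_lt_0_compat; lra).
        set (z := S n / (INR n * Tb n)). assert (Hz : S n = z * (INR n * Tb n)) by (unfold z; field; lra).
        assert (Hz0 : 0 <= z) by (unfold z; apply Rlt_le, Rdiv_lt_0_compat; lra).
        apply Rle_div_l; [lra|].
        assert (INR n * Tb n <= k * Tr n).
        { rewrite Hk in Hb2.
          assert (INR n * Tb n <= INR n * (k * K2 * P)) by (apply Rmult_le_compat_l; lra).
          assert (k * (K2 * (INR n * P)) <= k * Tr n) by (apply Rmult_le_compat_l; lra).
          replace (INR n * (k * K2 * P)) with (k * (K2 * (INR n * P))) in * by ring.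
          lra. }
        assert (z * (INR n * Tb n) <= z * (k * Tr n)) by (apply Rmult_le_compat_l; lra).
        lra. }
    apply is_lim_seq_spec in Hr. apply is_lim_seq_spec. intro eps.
    set (k := K1 / K2). assert (Hk0 : 0 < k) by (unfold k; apply Rdiv_lt_0_compat; lra).
    assert (He' : 0 < eps / (4 * k)) by (apply Rdiv_lt_0_compat; [apply cond_pos| lra]).
    destruct (Hr (mkposreal _ He')) as [M0 HM0]. simpl in HM0.
    set (M := Nat.max M0 (Nat.max N1 1)).
    destruct (bounded_init Tu (2 * M)) as (A & HA0 & HA).
    destruct (INR_unbounded (2 * A / (eps * K2))) as [Nb HNb].
    pose proof (cond_pos eps) as Heps.
    exists (Nat.max M (Nat.max N2 (Nat.max 3 Nb))). intros n Hn.
    assert (Hn3 : 3 <= INR n) by (replace 3 with (INR 3) by (simpl; lra); apply le_INR; lia).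
    assert (HnNb : INR Nb <= INR n) by (apply le_INR; lia).
    pose proof (hTr_pos n ltac:(lia)). pose proof (hTu_pos n ltac:(lia)).
    pose proof (hlow n ltac:(lia)).
    pose proof (p_ge1 a b n ltac:(lia)).
    set (P := polylog a b n) in *.
    assert (HS : forall m, (M <= m)%nat -> S m <= eps / (4 * k) * Tr m).
    { intros m Hm. pose proof (HM0 m ltac:(lia)) as HM0m. pose proof (hTr_pos m ltac:(lia)).
      apply Rlt_le. apply Rlt_div_l; [lra|].
      apply Rle_lt_trans with (Rabs (S m / Tr m - 0)); [|exact HM0m].
      rewrite Rminus_0_r. apply Rle_abs. }
    assert (HT : 0 <= K1 * P) by nra.
    assert (Hbd := Tu_bound Tu S Tr (eps / (4 * k)) M A (K1 * P) hTu_rec He' ltac:(lia)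
                    (fun m hm => HA m hm) HS HT n).
    assert (Hbd' : Tu n <= A + 2 * (eps / (4 * k)) * INR n * (K1 * P)).
    { apply Hbd. intros m Hm.
      pose proof (hup m ltac:(lia)). assert (Hpm : polylog a b m <= P) by exact (p_mono a b m n ltac:(lia) ltac:(lia)).
      pose proof (pos_INR m).
      assert (K1 * (INR m * polylog a b m) <= K1 * (INR m * P)).
      { apply Rmult_le_compat_l; [lra|]. apply Rmult_le_compat_l; lra. }
      lra. }
    assert (Hmid : 2 * (eps / (4 * k)) * INR n * (K1 * P) = (eps / 2) * (K2 * (INR n * P))).
    { unfold k. field. lra. }
    assert (HA' : A < eps / 2 * Tr n).
    { assert (Hq : 2 * A / (eps * K2) < INR n) by lra.
      apply Rlt_div_l in Hq; [|nra].
      assert (K2 * INR n <= K2 * (INR n * P)).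
      { apply Rmult_le_compat_l; [lra|]. nra. }
      assert (eps / 2 * (K2 * INR n) <= eps / 2 * Tr n) by (apply Rmult_le_compat_l; lra).
      nra. }
    assert (eps / 2 * (K2 * (INR n * P)) <= eps / 2 * Tr n) by (apply Rmult_le_compat_l; lra).
    rewrite Rminus_0_r, Rabs_pos_eq by (apply Rlt_le, Rdiv_lt_0_compat; lra).
    apply Rlt_div_l; [lra|]. lra.
Qed.
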